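(* Let $R$ be a commutative ring and $n\ge3$. Let $(v,w)\in H(R^n)$ with $q(v,w)=v\cdot w^{\intercal}=1$, and let $g\in\operatorname{Epin}_{2n}(R)$. Then, computing in the Clifford algebra $\mathrm{Cl}$ of $(H(R^n),q)$, there exists $\sigma\in E_n(R)$ such that $$g\,(v,w)\,g^{-1}=\big(v\sigma,\;w(\sigma^{\intercal})^{-1}\big).$$
   Context: $H(R^n)=R^n\oplus(R^n)^*$ (elements written as pairs $(v,w)$ of row vectors in $R^n$) with quadratic form $q(v,w)=v\cdot w^{\intercal}$; let $e_1,\dots,e_n,f_1,\dots,f_n$ be its standard basis. $\mathrm{Cl}=\mathrm{Cl}_0\oplus\mathrm{Cl}_1$ is the Clifford algebra of $(H(R^n),q)$ with its $\mathbb{Z}/2$-grading, containing $H(R^n)$ in $\mathrm{Cl}_1$; $x\mapsto x^*$ is its canonical involution (the anti-automorphism that is the identity on $H(R^n)$). $\operatorname{Spin}_{2n}(R)=\{x\in\mathrm{Cl}_0: xx^*=1,\ xH(R^n)x^{-1}=H(R^n)\}$, and $\pi:\operatorname{Spin}_{2n}(R)\to O(H(R^n))$, $\pi(g)(u)=gug^{-1}$. Let $\partial=(1\ n+1)\cdots(n\ 2n)$ and $E^o_{ij}(\lambda)=I_{2n}+\lambda(e_{ij}-e_{\partial(j)\partial(i)})$ for $1\le i\ne j\le 2n$, $\lambda\in R$ ($e_{ij}$ matrix units); $EO_{2n}(R)$ is the group they generate, viewed as a group of orthogonal transformations of $H(R^n)$ via matrices in the ordered basis $(e_1,\dots,e_n,f_1,\dots,f_n)$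 (this group is closed under transposition). $\operatorname{Epin}_{2n}(R)=\pi^{-1}(EO_{2n}(R))$. $E_n(R)$ is the subgroup of $GL_n(R)$ generated by elementary matrices $I+\lambda e_{ij}$, $i\ne j$. *)

(* Defs.v *)
From HB Require Import structures.
From mathcomp Require Import all_boot all_order all_algebra.
Set Implicit Arguments. Unset Strict Implicit. Unset Printing Implicit Defensive.
Import Order.TTheory GRing.Theory Num.Theory.
Local Open Scope ring_scope.

(* H(R^n) = R^n (+) (R^n)^* is represented by row vectors 'rV[R]_(n+n):
   the element (v,w) is row_mx v w, i.e. coordinates in the ordered basis
   (e_1,...,e_n,f_1,...,f_n). *)

Section Hyperbolic.
Variables (R : comPzRingType) (n : nat).

Definition qH (x : 'rV[R]_(n + n)) : R := (lsubmx x *m (rsubmx x)^T) 0 0.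

(* 0-based version of the involution partial = (1 n+1)...(n 2n) *)
Definition dpart (k : nat) : nat := (if k < n then k + n else k - n)%N.

Definition EOgen (i j : 'I_(n + n)) (l : R) : 'M[R]_(n + n) :=
  \matrix_(a, b) ((a == b)%:R
                  + l * ((a == i) && (b == j))%:R
                  - l * ((dpart a == j) && (dpart b == i))%:R).

(* EO_{2n}(R): the group generated by the E^o_{ij}(l), i <> j.
   (Each generator has inverse E^o_{ij}(-l), so the generated monoid is
   the generated group.) *)
Inductive in_EO : 'M[R]_(n + n) -> Prop :=
| EO_one : in_EO 1%:M
| EO_mul (i j : 'I_(n + n)) (l : R) (M : 'M[R]_(n + n)) :
    i != j -> in_EO M -> in_EO (EOgen i j l *m M).

Inductive in_En : 'M[R]_n -> Prop :=
| En_one : in_En 1%:M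
| En_mul (i j : 'I_n) (l : R) (M : 'M[R]_n) :
    i != j -> in_En M -> in_En ((1%:M + l *: delta_mx i j) *m M).

End Hyperbolic.

Section Clifford.
Variables (R : comPzRingType) (n : nat).

Definition clifford_rel (B : algType R) (phi : 'rV[R]_(n + n) -> B) :=
  forall x, phi x * phi x = (qH x)%:A.

Definition clifford_universal (A : algType R)
    (iota : {linear 'rV[R]_(n + n) -> A}) :=
  forall (B : algType R) (phi : {linear 'rV[R]_(n + n) -> B}),
    clifford_rel phi ->
    exists f : {lrmorphism A -> B},
      (forall x, f (iota x) = phi x) /\
      (forall f' : {lrmorphism A -> B},
          (forall x, f' (iota x) = phi x) -> f' =1 f).

Variables (A : unitAlgType R) (iota : {linear 'rV[R]_(n + n) -> A}).

Inductive in_Cl0 : A -> Prop :=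
| Cl0_one : in_Cl0 1
| Cl0_mul x u v : in_Cl0 x -> in_Cl0 (x * iota u * iota v)
| Cl0_add x y : in_Cl0 x -> in_Cl0 y -> in_Cl0 (x + y)
| Cl0_scale (a : R) x : in_Cl0 x -> in_Cl0 (a *: x).

Definition canonical_involution (star : A -> A) :=
  [/\ forall x y, star (x + y) = star x + star y,
      forall (a : R) x, star (a *: x) = a *: star x,
      star 1 = 1,
      forall x y, star (x * y) = star y * star x &
      forall u, star (iota u) = iota u].

Definition in_Spin (star : A -> A) (g : A) :=
  [/\ in_Cl0 g, g * star g = 1, g \is a GRing.unit,
      forall u, exists u', g * iota u * g^-1 = iota u' &
      forall u', exists u, g * iota u * g^-1 = iota u'].

(* pi(g) lies in EO_{2n}(R): its matrix (row-vector convention; EO is closed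
   under transposition, so the convention is immaterial) is in EO. *)
Definition pi_in_EO (g : A) :=
  exists M : 'M[R]_(n + n), in_EO M /\
    forall x, g * iota x * g^-1 = iota (x *m M).

Definition in_Epin (star : A -> A) (g : A) := in_Spin star g /\ pi_in_EO g.

End Clifford.

(* Main.v *)
Require Import Defs.
From HB Require Import structures.
From mathcomp Require Import all_boot all_order all_algebra.
From mathcomp Require Import ring zify.
Import GRing.Theory.
Local Open Scope ring_scope.

Section Aux.
Variables (R : comPzRingType) (n : nat).

Lemma En_mulmx (A B : 'M[R]_n) : in_En A -> in_En B -> in_En (A *m B).
Proof.
elim=> [|i j l M ij _ IH] HB; first by rewrite mul1mx.
by rewrite -mulmxA; apply: En_mul => //; apply: IH.
Qed.

Lemma En_elem (i j : 'I_n) (l : R) : i != j -> in_En (1%:M + l *: delta_mx i j).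
Proof.
move=> ij; rewrite -[X in in_En X]mulmx1; apply: En_mul => //; exact: En_one.
Qed.

Lemma En_sum (P : pred 'I_n) (N : 'M[R]_n) :
  (forall a b, ~~ (P a && ~~ P b) -> N a b = 0) -> in_En (1%:M + N).
Proof.
move=> HN.
pose F (p : 'I_n * 'I_n) : 'M[R]_n := N p.1 p.2 *: delta_mx p.1 p.2.
have -> : N = \sum_(p <- index_enum {: 'I_n * 'I_n}) F p.
  by rewrite {1}[N]matrix_sum_delta pair_bigA.
elim: (index_enum _) => [|p s IH]; first by rewrite big_nil addr0; exact: En_one.
rewrite big_cons.
have -> : 1%:M + (F p + \sum_(q <- s) F q)
       = (1%:M + F p) *m (1%:M + \sum_(q <- s) F q).
  have Z : F p *m \sum_(q <- s) F q = 0.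
    rewrite mulmx_sumr big1 // => q _.
    rewrite /F -scalemxAl -scalemxAr mul_delta_mx_cond.
    case: eqP => [e|_]; last by rewrite mulr0n !scaler0.
    case HP: (P p.2).
      by rewrite (HN p.1 p.2) ?scale0r ?scaler0 // HP andbF.
    by rewrite (HN q.1 q.2) ?scale0r ?scaler0 // -e HP.
  by rewrite mulmxDl mul1mx mulmxDr mulmx1 Z addr0 -addrA [_ + F p]addrC.
apply: En_mulmx => //.
case: (eqVneq p.1 p.2) => [e|ne]; last exact: En_elem.
have -> : F p = 0 by rewrite /F HN ?scale0r // e; case: (P p.2).
rewrite addr0; exact: En_one.
Qed.

Lemma ring_comm (T : pzRingType) (p q : T) :
  p * p = 0 -> q * q = 0 -> q * p = 0 ->
  (1 + p) * (1 + q) * (1 - p) * (1 - q) = 1 + p * q.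
Proof.
move=> pp qq qp.
have h1 : (1 + p) * (1 + q) * (1 - p) = 1 + q + p * q.
  rewrite !(mulrDl, mulrDr, mulrBl, mulrBr, mul1r, mulr1).
  rewrite !mulrN -!mulrA qp pp mulr0 !oppr0 !addr0.
  by rewrite [p + _]addrC addrA addrK.
rewrite h1 !(mulrDl, mulrDr, mulrBl, mulrBr, mul1r, mulr1).
by rewrite !mulrN -!mulrA qq mulr0 !oppr0 !addr0 subrK.
Qed.

Lemma ring_inv (T : pzRingType) (p : T) : p * p = 0 -> (1 + p) * (1 - p) = 1.
Proof. by move=> pp; rewrite mulrDl mul1r mulrBr mulr1 pp subr0 addrNK. Qed.

Lemma outerE (c : 'cV[R]_n) (r : 'rV[R]_n) a b : (c *m r) a b = c a 0 * r 0 b.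
Proof. by rewrite !mxE big_ord1. Qed.

Lemma En_comm (c : 'cV[R]_n) (r : 'rV[R]_n) (k : 'I_n) :
  c k 0 = 0 -> r 0 k = 0 -> r *m c = 0 -> in_En (1%:M + c *m r).
Proof.
move=> ck rk rc.
set p := c *m delta_mx (0 : 'I_1) k. set q := delta_mx k (0 : 'I_1) *m r.
have ek : delta_mx (0 : 'I_1) k *m c = 0.
  by rewrite -rowE; apply/rowP => j; rewrite !mxE (ord1 j).
have re : r *m delta_mx k (0 : 'I_1) = 0.
  by rewrite -colE; apply/colP => j; rewrite !mxE (ord1 j).
have pp : p *m p = 0 by rewrite /p mulmxA -[c *m _ *m c]mulmxA ek mulmx0 mul0mx.
have qq : q *m q = 0 by rewrite /q mulmxA -[_ *m r *m _]mulmxA re mulmx0 mul0mx.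
have qp : q *m p = 0 by rewrite /q /p mulmxA -[_ *m r *m c]mulmxA rc mulmx0 mul0mx.
have pq : p *m q = c *m r.
  rewrite /p /q mulmxA -[c *m _ *m _]mulmxA mul_delta_mx.
  by rewrite [delta_mx _ _]mx11_scalar mxE /= mulmx1.
have E : 1%:M + c *m r = (1%:M + p) *m (1%:M + q) *m (1%:M - p) *m (1%:M - q).
  move: pp qq qp pq; rewrite !mulmxE !idmxE => pp qq qp pq.
  by rewrite ring_comm // pq.
rewrite E; apply: En_mulmx; [apply: En_mulmx; [apply: En_mulmx|]|].
- apply: (@En_sum (fun a => a != k)) => a b /=; rewrite /p outerE !mxE.
  have [e|ne] := eqVneq a k; first by rewrite e ck mul0r.
  by rewrite /= negbK => /negbTE ->; rewrite mulr0.
- apply: (@En_sum (fun a => a == k)) => a b /=; rewrite /q outerE !mxE.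
  have [e|ne] := eqVneq a k; last by rewrite mul0r.
  by rewrite /= negbK => /eqP ->; rewrite rk mulr0.
- rewrite -mulNmx; apply: (@En_sum (fun a => a != k)) => a b /=; rewrite outerE !mxE.
  have [e|ne] := eqVneq a k; first by rewrite e ck oppr0 mul0r.
  by rewrite /= negbK => /negbTE ->; rewrite mulr0.
- rewrite -mulmxN; apply: (@En_sum (fun a => a == k)) => a b /=; rewrite outerE !mxE.
  have [e|ne] := eqVneq a k; last by rewrite mul0r.
  by rewrite /= negbK => /eqP ->; rewrite rk oppr0 mulr0.
Qed.


Lemma En_case3 (c : 'cV[R]_n) (r : 'rV[R]_n) (k : 'I_n) :
  c k 0 = 0 -> r *m c = 0 -> in_En (1%:M + c *m r).
Proof.
move=> ck rc.
set e := r 0 k *: delta_mx (0 : 'I_1) k.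
set d := r - e.
have dk : d 0 k = 0 by rewrite /d /e !mxE !eqxx /= mulr1 subrr.
have dc : d *m c = 0.
  rewrite /d /e mulmxBl -scalemxAl -rowE rc.
  by apply/rowP => j; rewrite !mxE (ord1 j) ck mulr0 subrr.
have -> : 1%:M + c *m r = (1%:M + c *m d) *m (1%:M + c *m e).
  rewrite mulmxDl mul1mx mulmxDr mulmx1 mulmxA -[c *m d *m c]mulmxA dc mulmx0 mul0mx addr0.
  by rewrite -addrA [c *m e + _]addrC -mulmxDr subrK.
apply: En_mulmx; first exact: (@En_comm c d k ck dk dc).
apply: (@En_sum (fun a => a != k)) => a b /=; rewrite /e outerE !mxE.
have [ea|ne] := eqVneq a k; first by rewrite ea ck mul0r.
by rewrite /= negbK => /negbTE ->; rewrite !mulr0.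
Qed.

Lemma En_case4 (c : 'cV[R]_n) (r : 'rV[R]_n) (k : 'I_n) :
  r 0 k = 0 -> r *m c = 0 -> in_En (1%:M + c *m r).
Proof.
move=> rk rc.
set e := c k 0 *: delta_mx k (0 : 'I_1).
set d := c - e.
have dk : d k 0 = 0 by rewrite /d /e !mxE !eqxx /= mulr1 subrr.
have rd : r *m d = 0.
  rewrite /d /e mulmxBr -scalemxAr -colE rc.
  by apply/rowP => j; rewrite !mxE rk mulr0 subrr.
have -> : 1%:M + c *m r = (1%:M + e *m r) *m (1%:M + d *m r).
  rewrite mulmxDl mul1mx mulmxDr mulmx1 mulmxA -[e *m r *m d]mulmxA rd mulmx0 mul0mx addr0.
  by rewrite -addrA -mulmxDl subrK.
apply: En_mulmx; last exact: (@En_comm d r k dk rk rd).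
apply: (@En_sum (fun a => a == k)) => a b /=; rewrite /e outerE !mxE.
have [ea|ne] := eqVneq a k; last by rewrite !mulr0 mul0r.
by rewrite /= negbK => /eqP ->; rewrite rk mulr0.
Qed.

Lemma inv_pair (p : 'M[R]_n) : p *m p = 0 ->
  (1%:M + p) *m (1%:M - p) = 1%:M /\ (1%:M - p) *m (1%:M + p) = 1%:M.
Proof.
rewrite !mulmxE !idmxE => pp; split; first exact: ring_inv.
by rewrite -{2}[p]opprK ring_inv // mulrN mulNr opprK.
Qed.

Lemma row_delta m (x : 'rV[R]_m) (a : 'I_m) (b : 'I_n) :
  x *m delta_mx a b = x 0 a *: delta_mx 0 b.
Proof.
have -> : (delta_mx a b : 'M[R]_(m, n)) = delta_mx a (0 : 'I_1) *m delta_mx 0 b by rewrite mul_delta_mx.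
by rewrite mulmxA -colE [col a x]mx11_scalar mul_scalar_mx mxE.
Qed.

End Aux.

Section DP.
Variable n : nat.

Lemma dpart_lt (a : 'I_(n + n)) : (dpart n a < n + n)%N.
Proof. have := ltn_ord a; rewrite /dpart; case: ifP => h; lia. Qed.

Definition dp (a : 'I_(n + n)) : 'I_(n + n) := Ordinal (dpart_lt a).

Lemma dpK : involutive dp.
Proof.
move=> a; apply: val_inj => /=; have := ltn_ord a; rewrite /dpart.
case: (ltnP a n) => h1; case: ifP => h2; lia.
Qed.

Lemma dp_l (i : 'I_n) : dp (lshift n i) = rshift n i.
Proof. apply: val_inj => /=; have := ltn_ord i; rewrite /dpart /=; case: ifP; lia. Qed.

Lemma dp_r (i : 'I_n) : dp (rshift n i) = lshift n i.
Proof. apply: val_inj => /=; have := ltn_ord i; rewrite /dpart /=; case: ifP; lia. Qed.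

Lemma dpartE (a j : 'I_(n + n)) : (dpart n a == j) = (a == dp j).
Proof.
have -> : (dpart n a == j) = (dp a == j) by [].
by apply/eqP/eqP => [<-|->]; rewrite dpK.
Qed.

Lemma EOgenE (R : comPzRingType) (i j : 'I_(n + n)) (l : R) :
  EOgen i j l = 1%:M + l *: delta_mx i j - l *: delta_mx (dp j) (dp i).
Proof. by apply/matrixP => a b; rewrite !mxE !dpartE. Qed.

End DP.

Section Gen.
Variables (R : comPzRingType) (n : nat).

Lemma exists_k (i j : 'I_n) : (3 <= n)%N -> exists k : 'I_n, (k != i) && (k != j).
Proof.
move=> n3.
pose k0 := (if (0 != i) && (0 != j) then 0 else if (1 != i) && (1 != j) then 1 else 2)%N.
have kl : (k0 < n)%N by rewrite /k0; case: ifP => _; [|case: ifP => _]; lia.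
exists (Ordinal kl); rewrite -!val_eqE /= /k0.
case: ifP => // /negbT H1; case: ifP => // /negbT H2.
move: H1 H2; rewrite !negb_and !negbK => /orP [] /eqP <- /orP [] /eqP <- //.
Qed.

Lemma gen_step (i j : 'I_(n + n)) (l : R) (v w : 'rV[R]_n) :
  (3 <= n)%N -> i != j -> v *m w^T = 1%:M ->
  exists sigma tau : 'M[R]_n,
    [/\ in_En sigma, tau *m sigma^T = 1%:M, sigma^T *m tau = 1%:M &
        row_mx v w *m EOgen i j l = row_mx (v *m sigma) (w *m tau)].
Proof.
move=> n3 ij vw.
have wv : w *m v^T = 1%:M by rewrite -[w]trmxK -trmx_mul vw trmx1.
rewrite EOgenE !mulmxDr mulmxN mulmx1 -!scalemxAr !row_delta.
move: ij; case: (split_ordP i) => i0 ->; case: (split_ordP j) => j0 -> ij;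
  rewrite ?dp_l ?dp_r ?row_mxEl ?row_mxEr ?delta_mx_lshift ?delta_mx_rshift
          !scale_row_mx !scaler0 opp_row_mx !add_row_mx ?oppr0 ?addr0.
- have ij0 : i0 != j0 by apply: contraNneq ij => ->.
  exists (1%:M + l *: delta_mx i0 j0), (1%:M - l *: delta_mx j0 i0).
  have sT : (1%:M + l *: delta_mx i0 j0)^T = 1%:M + l *: delta_mx j0 i0 :> 'M[R]_n
    by rewrite linearD /= trmx1 linearZ /= trmx_delta.
  have pp : (l *: delta_mx j0 i0) *m (l *: delta_mx j0 i0) = 0 :> 'M[R]_n
    by rewrite -scalemxAl -scalemxAr mul_delta_mx_0 ?scaler0.
  have [h1 h2] := @inv_pair R n _ pp.
  split; [by apply: En_elem | by rewrite sT | by rewrite sT |].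
  rewrite mulmxDr mulmx1 mulmxBr mulmx1 -!scalemxAr !row_delta.
  by congr row_mx; apply/rowP => b; rewrite !mxE; ring.
- have [k /andP [ki kj]] := exists_k i0 j0 n3.
  set a : 'rV[R]_n := l *: (v 0 i0 *: delta_mx 0 j0 - v 0 j0 *: delta_mx 0 i0).
  have av : a *m v^T = 0.
    rewrite /a -scalemxAl mulmxBl -!scalemxAl -!rowE.
    by apply/rowP => x; rewrite !mxE (ord1 x); ring.
  have va : v *m (- a^T) = 0 by rewrite mulmxN -[v]trmxK -trmx_mul av trmx0 oppr0.
  exists (1%:M + (- a^T) *m v), (1%:M + v^T *m a).
  have sT : (1%:M + (- a^T) *m v)^T = 1%:M - v^T *m a
    by rewrite linearD /= trmx1 trmx_mul linearN /= trmxK mulmxN.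
  have pp : (v^T *m a) *m (v^T *m a) = 0
    by rewrite mulmxA -[v^T *m a *m v^T]mulmxA av mulmx0 mul0mx.
  have [h1 h2] := @inv_pair R n _ pp.
  split; [| by rewrite sT | by rewrite sT |].
    apply: (@En_case3 R n _ _ k) => //.
    by rewrite !mxE (negbTE ki) (negbTE kj) !andbF !mulr0n !mulr0 subrr mulr0 oppr0.
  rewrite mulmxDr mulmx1 mulmxA va mul0mx addr0 mulmxDr mulmx1 mulmxA wv mul1mx.
  by congr row_mx; apply/rowP => b; rewrite !mxE; ring.
- have [k /andP [ki kj]] := exists_k i0 j0 n3.
  set a : 'rV[R]_n := l *: (w 0 i0 *: delta_mx 0 j0 - w 0 j0 *: delta_mx 0 i0).
  have aw : a *m w^T = 0.
    rewrite /a -scalemxAl mulmxBl -!scalemxAl -!rowE.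
    by apply/rowP => x; rewrite !mxE (ord1 x); ring.
  have wa : w *m a^T = 0 by rewrite -[w]trmxK -trmx_mul aw trmx0.
  exists (1%:M + w^T *m a), (1%:M + (- a^T) *m w).
  have sT : (1%:M + w^T *m a)^T = 1%:M + a^T *m w
    by rewrite linearD /= trmx1 trmx_mul trmxK.
  have pp : (a^T *m w) *m (a^T *m w) = 0
    by rewrite mulmxA -[a^T *m w *m a^T]mulmxA wa mulmx0 mul0mx.
  have [h1 h2] := @inv_pair R n _ pp.
  split; [| by rewrite sT mulNmx | by rewrite sT mulNmx |].
    apply: (@En_case4 R n _ _ k) => //.
    by rewrite !mxE (negbTE ki) (negbTE kj) !andbF !mulr0n !mulr0 subrr mulr0.
  rewrite mulmxDr mulmx1 mulmxA vw mul1mx mulmxDr mulmx1 mulmxA mulmxN wa oppr0 mul0mx addr0.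
  by congr row_mx; apply/rowP => b; rewrite !mxE; ring.
- have ij0 : i0 != j0 by apply: contraNneq ij => ->.
  exists (1%:M - l *: delta_mx j0 i0), (1%:M + l *: delta_mx i0 j0).
  have sT : (1%:M - l *: delta_mx j0 i0)^T = 1%:M - l *: delta_mx i0 j0 :> 'M[R]_n
    by rewrite linearB /= trmx1 linearZ /= trmx_delta.
  have pp : (l *: delta_mx i0 j0) *m (l *: delta_mx i0 j0) = 0 :> 'M[R]_n
    by rewrite -scalemxAl -scalemxAr mul_delta_mx_0 ?scaler0 // eq_sym.
  have [h1 h2] := @inv_pair R n _ pp.
  split; [by rewrite -scaleNr; apply: En_elem; rewrite eq_sym | by rewrite sT | by rewrite sT |].
  rewrite mulmxDr mulmx1 mulmxBr mulmx1 -!scalemxAr !row_delta.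
  by congr row_mx; apply/rowP => b; rewrite !mxE; ring.
Qed.

End Gen.

Lemma EO_main (R : comPzRingType) (n : nat) (M : 'M[R]_(n + n)) :
  (3 <= n)%N -> in_EO M ->
  forall v w : 'rV[R]_n, v *m w^T = 1%:M ->
  exists sigma tau : 'M[R]_n,
    [/\ in_En sigma, tau *m sigma^T = 1%:M, sigma^T *m tau = 1%:M &
        row_mx v w *m M = row_mx (v *m sigma) (w *m tau)].
Proof.
move=> n3; elim=> [|i j l M' ij _ IH] v w vw.
  exists 1%:M, 1%:M; split; rewrite ?trmx1 ?mulmx1 //; exact: En_one.
have [s1 [t1 [E1 h1 h1' e1]]] := @gen_step R n i j l v w n3 ij vw.
have vw1 : (v *m s1) *m (w *m t1)^T = 1%:M.
  have st : s1 *m t1^T = 1%:M by rewrite -[s1]trmxK -trmx_mul h1 trmx1.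
  by rewrite trmx_mul mulmxA -[v *m s1 *m _]mulmxA st mulmx1 vw.
have [s2 [t2 [E2 h2 h2' e2]]] := IH _ _ vw1.
exists (s1 *m s2), (t1 *m t2); split.
- exact: En_mulmx.
- by rewrite trmx_mul mulmxA -[t1 *m t2 *m _]mulmxA h2 mulmx1 h1.
- by rewrite trmx_mul mulmxA -[s2^T *m s1^T *m _]mulmxA h1' mulmx1 h2'.
- by rewrite mulmxA e1 e2 !mulmxA.
Qed.

Theorem theorem4p1 (R : comPzRingType) (n : nat) (A : unitAlgType R)
    (iota : {linear 'rV[R]_(n + n) -> A}) (star : A -> A) :
  (3 <= n)%N ->
  clifford_rel iota -> clifford_universal iota ->
  canonical_involution iota star ->
  forall v w : 'rV[R]_n, (v *m w^T) 0 0 = 1 ->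
  forall g : A, in_Epin iota star g ->
  exists (sigma tau : 'M[R]_n),
    [/\ in_En sigma, tau *m sigma^T = 1%:M, sigma^T *m tau = 1%:M &
        g * iota (row_mx v w) * g^-1 = iota (row_mx (v *m sigma) (w *m tau))].
Proof.
move=> n3 _ _ _ v w vw g [_ [M [HM Hg]]].
have vw' : v *m w^T = 1%:M by rewrite [v *m w^T]mx11_scalar vw.
have [s [t [E h h' e]]] := @EO_main R n M n3 HM v w vw'.
by exists s, t; split => //; rewrite Hg e.
Qed.
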